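(* Let $\mathcal{C}_{\mathrm{norm}}:=\operatorname{conv}(\{\Sigma_e/\operatorname{Tr}(\Sigma_e)\}_{e\in\mathcal{E}})$ and let $\mathcal{P}_{\mathrm{norm}}$ be the set of distributions $P$ on $\mathbb{R}^{1\times p}$ with $\mathbb{E}_P[\mathbf{x}]=0$, finite second moments, $\mathbb{E}_P\|\mathbf{x}\|_2^2>0$ and $\mathbb{E}_P[\mathbf{x}^\top\mathbf{x}]/\mathbb{E}_P[\|\mathbf{x}\|_2^2]\in\mathcal{C}_{\mathrm{norm}}$. Let $\mathcal{L}$ be one of $\mathcal{L}_{\mathrm{normRCS}}$, $-\mathcal{L}_{\mathrm{normVar}}$, $\mathcal{L}_{\mathrm{normReg}}$ and let $V_k^*\in\arg\min_{V\in\mathcal{O}_{p\times k}}\max_{e\in\mathcal{E}}\mathcal{L}(V;P_e)$ (i.e. $V_k^*$ solves norm-maxRCS, norm-minPCA, norm-maxRegret respectively). Then: (i) for all $V\in\mathcal{O}_{p\times k}$, $\sup_{P\in\mathcal{P}_{\mathrm{norm}}}\mathcal{L}(V;P)=\max_{e\in\mathcal{E}}\mathcal{L}(V;P_e)$; (ii) for all $V,W\in\mathcal{O}_{p\times k}$, if $\max_e\mathcal{L}(V;P_e)<\max_e\mathcal{L}(W;P_e)$ then $\sup_{P\in\mathcal{P}_{\mathrm{norm}}}\mathcal{L}(V;P)<\sup_{P\in\mathcal{P}_{\mathrm{norm}}}\mathcal{L}(W;P)$; (iii) $V_k^*\in\arg\min_{V\in\mathcal{O}_{p\times k}}\sup_{P\in\mathcal{P}_{\mathrm{norm}}}\mathcal{L}(V;P)$;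 (iv) the conclusion of (iii) does not hold in general for the solutions of poolPCA and sepPCA.
   Context: Let $p\ge 1$ and $1\le k\le p$ be integers and $\mathcal{O}_{p\times k}:=\{V\in\mathbb{R}^{p\times k}: V^\top V=I_k\}$. Source domains are $\mathcal{E}=\{1,\dots,E\}$; for each $e$, $P_e$ is a distribution on $\mathbb{R}^{1\times p}$ with mean zero and finite covariance $\Sigma_e=\mathbb{E}[\mathbf{x}^\top\mathbf{x}]$, $\operatorname{Tr}(\Sigma_e)>0$; weights $w_e>0$, $\sum_e w_e=1$. For symmetric PSD $\Sigma$ with positive trace and $V\in\mathcal{O}_{p\times k}$: $\mathcal{L}_{\mathrm{normVar}}(V;\Sigma)=\operatorname{Tr}(V^\top\Sigma V)/\operatorname{Tr}(\Sigma)$, $\mathcal{L}_{\mathrm{normRCS}}(V;\Sigma)=(\operatorname{Tr}(\Sigma)-\operatorname{Tr}(V^\top\Sigma V))/\operatorname{Tr}(\Sigma)$ ($=\mathbb{E}\|\mathbf{x}-\mathbf{x}VV^\top\|_2^2/\mathbb{E}\|\mathbf{x}\|_2^2$), $\mathcal{L}_{\mathrm{normReg}}(V;\Sigma)=\mathcal{L}_{\mathrm{normRCS}}(V;\Sigma)-\min_{W\in\mathcal{O}_{p\times k}}\mathcal{L}_{\mathrm{normRCS}}(W;\Sigma)$; for $P$ with covariance $\Sigma$, $\mathcal{L}(V;P):=\mathcal{L}(V;\Sigma)$. poolPCA: $V^{\mathrm{pool}}\in\arg\max_V\operatorname{Tr}(V^\top(\sum_e w_e\Sigma_e)V)$. sepPCA: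 with $V^{*,e}\in\arg\max_V\operatorname{Tr}(V^\top\Sigma_eV)$ and $e_0$ the smallest index minimizing $\operatorname{Tr}((V^{*,e})^\top\Sigma_eV^{*,e})$, $V^{\mathrm{sep}}:=V^{*,e_0}$. *)

(* Defs.v *)
(* R : realType, distributions on
   R^{1 x p} are probability measures on the measurable space p.-tuple R
   (product Borel sigma-algebra, as provided by measurable_structure.v). *)
From HB Require Import structures.
From mathcomp Require Import all_boot all_order all_algebra.
From mathcomp Require Import all_classical all_reals all_analysis.
Set Implicit Arguments. Unset Strict Implicit. Unset Printing Implicit Defensive.
Import Order.TTheory GRing.Theory Num.Theory.
Local Open Scope classical_set_scope.
Local Open Scope ring_scope.

Section Defs.
Variable R : realType.

Definition orth (p k : nat) : set 'M[R]_(p, k) :=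
  [set V | V^T *m V = 1%:M].

Definition centered_L2 (p : nat) (P : probability (p.-tuple R) R) : Prop :=
  (forall i : 'I_p, P.-integrable setT (fun x => (tnth x i)%:E)) /\
  (forall i : 'I_p, P.-integrable setT (fun x => (tnth x i ^+ 2)%:E)) /\
  (forall i : 'I_p, (\int[P]_x (tnth x i)%:E = 0)%E).

Definition cov (p : nat) (P : probability (p.-tuple R) R) : 'M[R]_p :=
  \matrix_(i, j) fine (\int[P]_x (tnth x i * tnth x j)%:E).

Definition normVar (p k : nat) (V : 'M[R]_(p, k)) (S : 'M[R]_p) : R :=
  \tr (V^T *m S *m V) / \tr S.

Definition normRCS (p k : nat) (V : 'M[R]_(p, k)) (S : 'M[R]_p) : R :=
  (\tr S - \tr (V^T *m S *m V)) / \tr S.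

Definition normReg (p k : nat) (V : 'M[R]_(p, k)) (S : 'M[R]_p) : R :=
  normRCS V S - inf [set normRCS W S | W in @orth p k].

End Defs.
Arguments orth {R} p k.

Inductive loss_kind := LnormRCS | LnegNormVar | LnormReg.

Section Defs2.
Variable R : realType.
Local Open Scope classical_set_scope.
Local Open Scope ring_scope.

Definition lossM (L : loss_kind) (p k : nat) (V : 'M[R]_(p, k)) (S : 'M[R]_p) : R :=
  match L with
  | LnormRCS => normRCS V S
  | LnegNormVar => - normVar V S
  | LnormReg => normReg V S
  end.

Definition lossP (L : loss_kind) (p k : nat) (V : 'M[R]_(p, k))
  (P : probability (p.-tuple R) R) : R := lossM L V (cov P).

Definition maxLoss (L : loss_kind) (p k E : nat) (Ps : 'I_E -> probability (p.-tuple R) R)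
  (V : 'M[R]_(p, k)) : R :=
  sup [set lossP L V (Ps e) | e in [set: 'I_E]].

Definition trnormalize (p : nat) (S : 'M[R]_p) : 'M[R]_p := (\tr S)^-1 *: S.

Definition Cnorm (p E : nat) (Ps : 'I_E -> probability (p.-tuple R) R) : set 'M[R]_p :=
  [set M | exists lam : 'I_E -> R, (forall e, 0 <= lam e) /\ \sum_e lam e = 1 /\
      M = \sum_e lam e *: trnormalize (cov (Ps e))].

Definition Pnorm (p E : nat) (Ps : 'I_E -> probability (p.-tuple R) R) :
  set (probability (p.-tuple R) R) :=
  [set P | centered_L2 P /\ 0 < \tr (cov P) /\ Cnorm Ps (trnormalize (cov P))].

Definition supLoss (L : loss_kind) (p k E : nat) (Ps : 'I_E -> probability (p.-tuple R) R)
  (V : 'M[R]_(p, k)) : R :=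
  sup [set lossP L V P | P in Pnorm Ps].

Definition sources_ok (p E : nat) (Ps : 'I_E -> probability (p.-tuple R) R) : Prop :=
  forall e, centered_L2 (Ps e) /\ 0 < \tr (cov (Ps e)).

Definition weights_ok (E : nat) (w : 'I_E -> R) : Prop :=
  (forall e, 0 < w e) /\ \sum_e w e = 1.

Definition is_poolPCA (p k E : nat) (Ps : 'I_E -> probability (p.-tuple R) R)
  (w : 'I_E -> R) (V : 'M[R]_(p, k)) : Prop :=
  orth p k V /\ forall W, orth p k W ->
    \tr (W^T *m (\sum_e w e *: cov (Ps e)) *m W) <=
    \tr (V^T *m (\sum_e w e *: cov (Ps e)) *m V).

Definition is_PCA (p k : nat) (S : 'M[R]_p) (V : 'M[R]_(p, k)) : Prop :=
  orth p k V /\ forall W, orth p k W -> \tr (W^T *m S *m W) <= \tr (V^T *m S *m V).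

(* sepPCA solution: V^{*,e0} with e0 the smallest index minimizing
   Tr((V^{*,e})^T Sigma_e V^{*,e}) *)
Definition is_sepPCA (p k E : nat) (Ps : 'I_E -> probability (p.-tuple R) R)
  (V : 'M[R]_(p, k)) : Prop :=
  exists (Vs : 'I_E -> 'M[R]_(p, k)) (e0 : 'I_E),
    (forall e, is_PCA (cov (Ps e)) (Vs e)) /\
    (forall e, \tr ((Vs e0)^T *m cov (Ps e0) *m Vs e0) <= \tr ((Vs e)^T *m cov (Ps e) *m Vs e)) /\
    (forall e : 'I_E, (e < e0)%N ->
       \tr ((Vs e0)^T *m cov (Ps e0) *m Vs e0) < \tr ((Vs e)^T *m cov (Ps e) *m Vs e)) /\
    V = Vs e0.

Definition is_robust_opt (L : loss_kind) (p k E : nat)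
  (Ps : 'I_E -> probability (p.-tuple R) R) (V : 'M[R]_(p, k)) : Prop :=
  orth p k V /\ forall W, orth p k W -> supLoss L Ps V <= supLoss L Ps W.

End Defs2.

(* Main.v *)
Set Warnings "-all".
Require Import Defs.
From HB Require Import structures.
From mathcomp Require Import all_boot all_order all_algebra.
From mathcomp Require Import all_classical all_reals all_analysis.
From mathcomp Require Import measurable_realfun ring lra.
Set Implicit Arguments. Unset Strict Implicit. Unset Printing Implicit Defensive.
Import Order.TTheory GRing.Theory Num.Theory.
Local Open Scope classical_set_scope.
Local Open Scope ring_scope.
Section LA.
Variable R : realType.

Definition tq (p k : nat) (W : 'M[R]_(p, k)) (S : 'M[R]_p) : R := \tr (W^T *m S *m W).

Lemma tqZ p k (W : 'M[R]_(p,k)) c S : tq W (c *: S) = c * tq W S.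
Proof. by rewrite /tq -scalemxAr -scalemxAl mxtraceZ. Qed.

Lemma tq_sum p k (W : 'M[R]_(p,k)) E (F : 'I_E -> 'M[R]_p) :
  tq W (\sum_e F e) = \sum_e tq W (F e).
Proof. by rewrite /tq mulmx_sumr mulmx_suml linear_sum. Qed.

Lemma tr_trnormalize p (S : 'M[R]_p) : \tr S != 0 -> \tr (trnormalize S) = 1.
Proof. by move=> h; rewrite /trnormalize mxtraceZ mulVf. Qed.

Lemma normRCS_n p k (W : 'M[R]_(p,k)) S : \tr S != 0 ->
  normRCS W S = 1 - tq W (trnormalize S).
Proof.
move=> h; rewrite /normRCS /trnormalize tqZ /tq mulrBl divff //.
by rewrite mulrC.
Qed.

Lemma normVar_n p k (W : 'M[R]_(p,k)) S : \tr S != 0 ->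
  - normVar W S = normRCS W S - 1.
Proof.
move=> h; rewrite /normRCS /normVar mulrBl divff //; ring.
Qed.

Lemma entry_le1 p k (W : 'M[R]_(p,k)) i c : orth p k W -> `|W i c| <= 1.
Proof.
move=> hW.
have : (W^T *m W) c c = 1 by rewrite hW mxE eqxx.
rewrite mxE (bigD1 i) //= !mxE => h.
have h0 : 0 <= \sum_(j < p | j != i) W^T c j * W j c.
  by apply: sumr_ge0 => j _; rewrite mxE -expr2 sqr_ge0.
have : W i c ^+ 2 <= 1 by rewrite expr2 -h lerDl.
rewrite expr2 => h1; rewrite ler_norml; apply/andP; split; nra.
Qed.


Definition Bnd p k (S : 'M[R]_p) : R := \sum_(c < k) \sum_(j < p) \sum_(i < p) `|S i j|.

Lemma tq_bound p k (W : 'M[R]_(p,k)) S : orth p k W -> `|tq W S| <= Bnd k S.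
Proof.
move=> hW; rewrite /tq /Bnd /mxtrace.
apply: (le_trans (ler_norm_sum _ _ _)); apply: ler_sum => c _.
rewrite mxE; apply: (le_trans (ler_norm_sum _ _ _)); apply: ler_sum => j _.
rewrite mxE normrM.
apply: (le_trans (ler_wpM2l _ (entry_le1 j c hW))); first by rewrite normr_ge0.
rewrite mulr1; apply: (le_trans (ler_norm_sum _ _ _)); apply: ler_sum => i _.
rewrite mxE normrM; rewrite -[X in _ <= X]mul1r; apply: ler_wpM2r; first by rewrite normr_ge0.
by rewrite ?mxE; apply: entry_le1.
Qed.

Lemma conv_RCS p k E (S : 'M[R]_p) (Ss : 'I_E -> 'M[R]_p) (lam : 'I_E -> R) :
  \tr S != 0 -> (forall e, \tr (Ss e) != 0) -> \sum_e lam e = 1 ->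
  trnormalize S = \sum_e lam e *: trnormalize (Ss e) ->
  forall W : 'M[R]_(p,k), normRCS W S = \sum_e lam e * normRCS W (Ss e).
Proof.
move=> hS hSs hl hT W.
rewrite normRCS_n // hT tq_sum.
under [RHS]eq_bigr => e _ do rewrite normRCS_n // mulrBr mulr1.
by rewrite sumrB hl; under eq_bigr => e _ do rewrite tqZ.
Qed.

Definition infRCS p k (S : 'M[R]_p) := inf [set normRCS W S | W in orth p k].

Lemma infRCS_le p k (S : 'M[R]_p) (W : 'M[R]_(p,k)) : \tr S != 0 -> orth p k W ->
  infRCS k S <= normRCS W S.
Proof.
move=> hS hW; apply: ge_inf; last by exists W.
exists (1 - Bnd k (trnormalize S)) => _ [Z hZ <-].
rewrite normRCS_n // lerD2l lerN2.
exact: le_trans (ler_norm _) (tq_bound _ hZ).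
Qed.

Lemma normReg_E p k (W : 'M[R]_(p,k)) S : normReg W S = normRCS W S - infRCS k S.
Proof. by []. Qed.

Lemma conv_loss L p k E (S : 'M[R]_p) (Ss : 'I_E -> 'M[R]_p) (lam : 'I_E -> R)
  (V : 'M[R]_(p,k)) : orth p k V ->
  \tr S != 0 -> (forall e, \tr (Ss e) != 0) -> (forall e, 0 <= lam e) -> \sum_e lam e = 1 ->
  trnormalize S = \sum_e lam e *: trnormalize (Ss e) ->
  lossM L V S <= \sum_e lam e * lossM L V (Ss e).
Proof.
move=> hV hS hSs hl0 hl hT.
have hc := conv_RCS hS hSs hl hT.
case: L => /=.
- by rewrite hc.
- rewrite normVar_n // hc.
  under [X in _ <= X]eq_bigr => e _ do rewrite normVar_n // mulrBr mulr1.
  by rewrite sumrB hl.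
- rewrite normReg_E hc.
  under [X in _ <= X]eq_bigr => e _ do rewrite normReg_E mulrBr.
  rewrite sumrB lerD2l lerN2.
  apply: lb_le_inf; first by exists (normRCS V S), V.
  move=> _ [W hW <-]; rewrite hc; apply: ler_sum => e _.
  by apply: ler_wpM2l => //; apply: infRCS_le.
Qed.

Lemma Ps_in_Pnorm p E (Ps : 'I_E -> probability (p.-tuple R) R) e :
  sources_ok Ps -> Pnorm Ps (Ps e).
Proof.
move=> hs; have [hc ht] := hs e; split => //; split => //.
exists (fun e' => (e' == e)%:R); split; first by move=> e'; rewrite ler0n.
split.
  rewrite (bigD1 e) //= eqxx big1 ?addr0 // => e' /negPf ->; by [].
rewrite (bigD1 e) //= eqxx scale1r big1 ?addr0 // => e' /negPf ->.
by rewrite scale0r.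
Qed.

Lemma sup_eq_max L p k E (Ps : 'I_E -> probability (p.-tuple R) R) (V : 'M[R]_(p,k)) :
  (1 <= E)%N -> sources_ok Ps -> orth p k V -> supLoss L Ps V = maxLoss L Ps V.
Proof.
move=> hE hs hV.
have e0 : 'I_E by exact: Ordinal hE.
set B := [set lossP L V (Ps e) | e in [set: 'I_E]].
set A := [set lossP L V P | P in Pnorm Ps].
have Bne : B !=set0 by exists (lossP L V (Ps e0)), e0.
have Bub : has_ubound B.
  exists (\sum_e `|lossP L V (Ps e)|) => _ [e _ <-].
  rewrite (bigD1 e) //=; apply: le_trans (ler_norm _) _.
  by rewrite lerDl; apply: sumr_ge0 => ? _; apply: normr_ge0.
have hm : forall e, lossP L V (Ps e) <= sup B.
  by move=> e; apply: ub_le_sup => //; exists e.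
have Aub : ubound A (sup B).
  move=> _ [P [hcP [htP [lam [hl0 [hl hT]]]]] <-].
  rewrite /lossP; apply: le_trans.
    apply: (conv_loss L hV _ _ hl0 hl hT); first by rewrite gt_eqF.
    by move=> e; have [_ h] := hs e; rewrite gt_eqF.
  apply: le_trans (ler_sum _ (fun e _ => ler_wpM2l (hl0 e) (hm e))) _.
  by rewrite -mulr_suml hl mul1r.
rewrite /supLoss /maxLoss -/A -/B; apply/eqP; rewrite eq_le; apply/andP; split.
  apply: ge_sup => //; by exists (lossP L V (Ps e0)), (Ps e0) => //; apply: Ps_in_Pnorm.
apply: ge_sup => // _ [e _ <-]; apply: ub_le_sup; first by exists (sup B).
by exists (Ps e) => //; apply: Ps_in_Pnorm.
Qed.
End LA.
Section Ex.
Variable R : realType.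
Local Notation T := (2.-tuple R).
Lemma hf0 : (0:R) <= 2^-1. Proof. by rewrite invr_ge0. Qed.
Definition hf : {nonneg R} := NngNum hf0.
Definition mu2 (a b : T) := measure_add (mscale hf (@dirac _ T a R)) (mscale hf (@dirac _ T b R)).
HB.instance Definition _ a b := Measure.on (mu2 a b).
Lemma mu2T a b : mu2 a b setT = 1%E.
Proof. rewrite /mu2 measure_addE.
transitivity ((2^-1)%:E * (@dirac _ T a R setT) + (2^-1)%:E * (@dirac _ T b R setT))%E; first by [].
rewrite !diracT !mule1 -EFinD; congr EFin; field; by rewrite ?pnatr_eq0. Qed.
HB.instance Definition _ a b := Measure_isProbability.Build _ _ _ (mu2 a b) (mu2T a b).

Local Open Scope ereal_scope.
Lemma int_mu2_ge0 (a b : T) (g : T -> \bar R) : measurable_fun (@setT T) g -> (forall x, 0 <= g x) ->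
  \int[mu2 a b]_(x in setT) g x = (2^-1)%:E * g a + (2^-1)%:E * g b.
Proof.
move=> mg g0.
rewrite /mu2 ge0_integral_measure_add // !ge0_integral_mscale //.
by rewrite !integral_dirac // !diracT !mul1e.
Qed.

Lemma int_mu2 (a b : T) (f : T -> R) : measurable_fun (@setT T) f ->
  (mu2 a b).-integrable setT (EFin \o f) /\
  \int[mu2 a b]_(x in setT) (f x)%:E = ((2^-1 * f a + 2^-1 * f b)%R)%:E.
Proof.
move=> mf.
have mfe : measurable_fun (@setT T) (EFin \o f) by exact/measurable_EFinP.
split.
  apply/integrableP; split => //.
  rewrite int_mu2_ge0 //; last by apply: measurableT_comp.
  by rewrite -!EFinM -EFinD ltry.
have mp : measurable_fun (@setT T) (EFin \o f^\+%R).
  by apply/measurable_EFinP; apply: measurable_funrpos.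
have mn : measurable_fun (@setT T) (EFin \o f^\-%R).
  by apply/measurable_EFinP; apply: measurable_funrneg.
rewrite integralE funerpos funerneg.
rewrite !int_mu2_ge0 //; last 2 first.
- by move=> x; rewrite /= lee_fin funrneg_ge0.
- by move=> x; rewrite /= lee_fin funrpos_ge0.
rewrite /= -!EFinM -!EFinD; congr EFin.
have h x : f x = (f^\+ x - f^\- x)%R by rewrite -[in LHS](funrposBneg f).
rewrite (h a) (h b); ring.
Qed.

Local Close Scope ereal_scope.
Definition cf (x y : R) (i : 'I_2) : R := if (i : nat) == 0%N then x else y.
Definition pt (x y : R) : T := [tuple x; y].
Lemma tnth_pt x y i : tnth (pt x y) i = cf x y i.
Proof. by case: i => [[|[|]]]. Qed.

Definition Pex (x y : R) : probability T R := mu2 (pt x y) (pt (-x) (-y)).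

Lemma mtn (i : 'I_2) : measurable_fun (@setT T) (fun t : T => tnth t i).
Proof. exact: measurable_tnth. Qed.

Lemma cov_Pex x y : cov (Pex x y) = \matrix_(i, j) (cf x y i * cf x y j).
Proof.
apply/matrixP => i j; rewrite !mxE.
have [_ ->] := @int_mu2 (pt x y) (pt (-x) (-y)) (fun t => tnth t i * tnth t j)
  (measurable_funM (mtn i) (mtn j)).
rewrite /= !tnth_pt /cf.
by case: ifP => _; case: ifP => _; rewrite mulrNN; field.
Qed.

Lemma centered_Pex x y : centered_L2 (Pex x y).
Proof.
split; [|split].
- by move=> i; have [h _] := int_mu2 (pt x y) (pt (-x) (-y)) (mtn i).
- move=> i; have [h _] := @int_mu2 (pt x y) (pt (-x) (-y)) (fun t => tnth t i ^+ 2)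
    (measurable_funX 2 (mtn i)).
  exact: h.
- move=> i; have [_ ->] := int_mu2 (pt x y) (pt (-x) (-y)) (mtn i).
  by rewrite !tnth_pt /cf; case: ifP => _; rewrite -mulrDr ?addrN ?subrr mulr0.
Qed.

Definition i1 : 'I_2 := Ordinal (isT : (1 < 2)%N).
Lemma sum2 (F : 'I_2 -> R) : \sum_(i < 2) F i = F ord0 + F i1.
Proof. rewrite big_ord_recl big_ord1; congr (_ + F _); exact: val_inj. Qed.

Lemma cf0 x y : cf x y ord0 = x. Proof. by []. Qed.
Lemma cf1 x y : cf x y i1 = y. Proof. by []. Qed.

Lemma tq_cov (W : 'M[R]_(2,1)) x y :
  tq W (cov (Pex x y)) = (W ord0 ord0 * x + W i1 ord0 * y) ^+ 2.
Proof.
rewrite cov_Pex /tq /mxtrace big_ord1 !mxE sum2 !mxE !sum2 !mxE !cf0 !cf1.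
ring.
Qed.

Lemma tr_cov x y : \tr (cov (Pex x y)) = x ^+ 2 + y ^+ 2.
Proof. by rewrite cov_Pex /mxtrace sum2 !mxE !cf0 !cf1 !expr2. Qed.

Lemma orth2 (W : 'M[R]_(2,1)) : orth 2 1 W <-> W ord0 ord0 ^+ 2 + W i1 ord0 ^+ 2 = 1.
Proof.
have E : (W^T *m W) ord0 ord0 = W ord0 ord0 ^+ 2 + W i1 ord0 ^+ 2.
  by rewrite !mxE sum2 !mxE !expr2.
split => [h|h]; first by rewrite -E h mxE.
rewrite /orth /=; apply/matrixP => i j; rewrite !ord1 E h mxE //.
Qed.
End Ex.
Section Ex2.
Variable R : realType.
Local Notation T := (2.-tuple R).

Lemma I2_ind (P : 'I_2 -> Prop) : P ord0 -> P i1 -> forall e, P e.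
Proof.
move=> h0 h1 [[|[|//]]] h.
- by have -> : Ordinal h = ord0 by exact: val_inj.
- by have -> : Ordinal h = i1 by exact: val_inj.
Qed.

Definition Psx : 'I_2 -> probability T R :=
  fun e => if (e : nat) == 0%N then Pex 2 0 else Pex 0 1.

Definition col2 (x y : R) : 'M[R]_(2,1) := \matrix_(i, j) cf x y i.
Lemma col2_0 x y : col2 x y ord0 ord0 = x. Proof. by rewrite mxE. Qed.
Lemma col2_1 x y : col2 x y i1 ord0 = y. Proof. by rewrite mxE. Qed.

Lemma trc0 : \tr (cov (Psx ord0)) = 4.
Proof. by rewrite /Psx /= tr_cov expr0n addr0 /=; rewrite -natrX. Qed.
Lemma trc1 : \tr (cov (Psx i1)) = 1.
Proof. by rewrite /Psx /= tr_cov expr0n add0r expr1n. Qed.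

Lemma sources_Psx : sources_ok Psx.
Proof.
apply: I2_ind; (split; first exact: centered_Pex).
- by rewrite trc0.
- by rewrite trc1.
Qed.

Lemma tq0 (W : 'M[R]_(2,1)) : tq W (cov (Psx ord0)) = 4 * W ord0 ord0 ^+ 2.
Proof. rewrite /Psx /= tq_cov; ring. Qed.
Lemma tq1 (W : 'M[R]_(2,1)) : tq W (cov (Psx i1)) = W i1 ord0 ^+ 2.
Proof. rewrite /Psx /= tq_cov; ring. Qed.

Lemma rcs0 (W : 'M[R]_(2,1)) : normRCS W (cov (Psx ord0)) = 1 - W ord0 ord0 ^+ 2.
Proof.
rewrite /normRCS trc0 -/(tq W _) tq0; by field.
Qed.
Lemma rcs1 (W : 'M[R]_(2,1)) : normRCS W (cov (Psx i1)) = 1 - W i1 ord0 ^+ 2.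
Proof. by rewrite /normRCS trc1 -/(tq W _) tq1 divr1. Qed.

Lemma rcs_ge0 e (W : 'M[R]_(2,1)) : orth 2 1 W -> 0 <= normRCS W (cov (Psx e)).
Proof.
move/orth2 => h; move: e; apply: I2_ind; [rewrite rcs0|rewrite rcs1]; nra.
Qed.

Lemma rcs_le1 e (W : 'M[R]_(2,1)) : normRCS W (cov (Psx e)) <= 1.
Proof.
move: e; apply: I2_ind; [rewrite rcs0|rewrite rcs1]; nra.
Qed.

Lemma orth_col2 x y : x ^+ 2 + y ^+ 2 = 1 -> orth 2 1 (col2 x y).
Proof. by move=> h; apply/orth2; rewrite col2_0 col2_1. Qed.

Lemma inf0 e : infRCS 1 (cov (Psx e)) = 0.
Proof.
apply/eqP; rewrite eq_le; apply/andP; split; last first.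
  apply: lb_le_inf; first by exists (normRCS (col2 1 0) (cov (Psx e))), (col2 1 0) => //;
    apply: orth_col2; rewrite expr1n expr0n addr0.
  by move=> _ [W hW <-]; apply: rcs_ge0.
move: e; apply: I2_ind.
- apply: le_trans (infRCS_le _ _) _.
  + by rewrite trc0.
  + by apply: (orth_col2 (x:=1) (y:=0)); rewrite expr1n expr0n addr0.
  by rewrite rcs0 col2_0 expr1n subrr.
- apply: le_trans (infRCS_le _ _) _.
  + by rewrite trc1.
  + by apply: (orth_col2 (x:=0) (y:=1)); rewrite expr1n expr0n add0r.
  by rewrite rcs1 col2_1 expr1n subrr.
Qed.

Definition cL (L : loss_kind) : R := if L is LnegNormVar then 1 else 0.

Lemma lossPx L e (W : 'M[R]_(2,1)) : lossP L W (Psx e) = normRCS W (cov (Psx e)) - cL L.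
Proof.
have htr : \tr (cov (Psx e)) != 0.
  by move: e; apply: I2_ind; [rewrite trc0|rewrite trc1].
case: L => /=; rewrite /lossP /=.
- by rewrite subr0.
- by rewrite normVar_n.
- by rewrite normReg_E inf0.
Qed.

Lemma maxLoss_ge L (W : 'M[R]_(2,1)) e :
  lossP L W (Psx e) <= maxLoss L Psx W.
Proof.
apply: ub_le_sup; last by exists e.
exists (1 - cL L) => _ [e' _ <-]; rewrite lossPx lerD2r; exact: rcs_le1.
Qed.

Lemma maxLoss_le L (W : 'M[R]_(2,1)) c :
  (forall e, lossP L W (Psx e) <= c) -> maxLoss L Psx W <= c.
Proof.
move=> h; apply: ge_sup; first by exists (lossP L W (Psx ord0)), ord0.
by move=> _ [e _ <-]; apply: h.
Qed.

Definition Wg : 'M[R]_(2,1) := col2 (3/5) (4/5).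
Lemma orth_Wg : orth 2 1 Wg.
Proof. by apply: orth_col2; field. Qed.

Lemma maxWg L : maxLoss L Psx Wg <= 16/25 - cL L.
Proof.
apply: maxLoss_le; apply: I2_ind; rewrite lossPx lerD2r.
- rewrite rcs0 /Wg col2_0 expr2; lra.
- rewrite rcs1 /Wg col2_1 expr2; lra.
Qed.

Lemma not_robust L (V : 'M[R]_(2,1)) e : orth 2 1 V -> lossP L V (Psx e) = 1 - cL L ->
  ~ is_robust_opt L Psx V.
Proof.
move=> hV he [_ h]; have := h Wg orth_Wg.
rewrite (sup_eq_max _ _ sources_Psx hV) // (sup_eq_max _ _ sources_Psx orth_Wg) //.
have := maxLoss_ge L V e; have := maxWg L; rewrite he; lra.
Qed.

Definition wx : 'I_2 -> R := fun _ => 2^-1.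

Lemma weights_wx : weights_ok wx.
Proof.
split; first by move=> e; rewrite /wx invr_gt0.
by rewrite sum2 /wx; field.
Qed.

Definition V1 := col2 1 0.
Definition V2 := col2 0 1.
Lemma orth_V1 : orth 2 1 V1. Proof. by apply: orth_col2; rewrite expr1n expr0n addr0. Qed.
Lemma orth_V2 : orth 2 1 V2. Proof. by apply: orth_col2; rewrite expr1n expr0n add0r. Qed.

Lemma pool_V1 : is_poolPCA Psx wx V1.
Proof.
split; first exact: orth_V1.
move=> W /orth2 hW.
rewrite -/(tq W _) -/(tq V1 _) !tq_sum sum2 sum2 !tqZ !tq0 !tq1 /V1 col2_0 col2_1 /wx.
rewrite !expr2 in hW *; nra.
Qed.

Lemma sep_V2 : is_sepPCA Psx V2.
Proof.
exists (fun e => if (e : nat) == 0%N then V1 else V2), i1; split; [|split; [|split]] => //.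
- apply: I2_ind; split => /=; [exact: orth_V1| |exact: orth_V2|];
  move=> W /orth2 hW; rewrite -/(tq W _) -/(tq _ _) ?tq0 ?tq1 /V1 /V2 ?col2_0 ?col2_1 expr1n; nra.
- apply: I2_ind; rewrite /= -/(tq _ _) -/(tq _ _) ?tq0 ?tq1 /V1 /V2 ?col2_0 ?col2_1 expr1n //; lra.
- apply: I2_ind => // _; rewrite /= -/(tq _ _) -/(tq _ _) ?tq0 ?tq1 /V1 /V2 ?col2_0 ?col2_1 expr1n; lra.
Qed.
End Ex2.

Theorem mainTheorem3 (R : realType) (L : loss_kind) :
  (forall (p k E : nat) (Ps : 'I_E -> probability (p.-tuple R) R),
    (1 <= p)%N -> (1 <= k)%N -> (k <= p)%N -> (1 <= E)%N ->
    sources_ok Ps ->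
    (* (i) *)
    (forall V : 'M[R]_(p, k), orth p k V -> supLoss L Ps V = maxLoss L Ps V) /\
    (* (ii) *)
    (forall V W : 'M[R]_(p, k), orth p k V -> orth p k W ->
       maxLoss L Ps V < maxLoss L Ps W -> supLoss L Ps V < supLoss L Ps W) /\
    (* (iii) *)
    (forall Vstar : 'M[R]_(p, k), orth p k Vstar ->
       (forall V, orth p k V -> maxLoss L Ps Vstar <= maxLoss L Ps V) ->
       is_robust_opt L Ps Vstar)) /\
  (* (iv) poolPCA *)
  (exists (p k E : nat) (Ps : 'I_E -> probability (p.-tuple R) R) (w : 'I_E -> R)
          (V : 'M[R]_(p, k)),
     [/\ (1 <= k)%N /\ (k <= p)%N, sources_ok Ps, weights_ok w,
         is_poolPCA Ps w V & ~ is_robust_opt L Ps V]) /\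
  (* (iv) sepPCA *)
  (exists (p k E : nat) (Ps : 'I_E -> probability (p.-tuple R) R) (w : 'I_E -> R)
          (V : 'M[R]_(p, k)),
     [/\ (1 <= k)%N /\ (k <= p)%N, sources_ok Ps, weights_ok w,
         is_sepPCA Ps V & ~ is_robust_opt L Ps V]).
Proof.
split.
  move=> p k E Ps hp hk hkp hE hs; split; [|split].
  - by move=> V hV; rewrite (sup_eq_max _ hE hs hV).
  - by move=> V W hV hW; rewrite (sup_eq_max _ hE hs hV) (sup_eq_max _ hE hs hW).
  - move=> Vs hVs hmin; split => // W hW.
    by rewrite (sup_eq_max _ hE hs hVs) (sup_eq_max _ hE hs hW); exact: hmin.
split.
  exists 2%N, 1%N, 2%N, (@Psx R), (@wx R), (@V1 R); split => //.
  - exact: sources_Psx.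
  - exact: weights_wx.
  - exact: pool_V1.
  apply: (not_robust (e := i1) (orth_V1 R)).
  by rewrite lossPx rcs1 /V1 col2_1 expr0n subr0.
exists 2%N, 1%N, 2%N, (@Psx R), (@wx R), (@V2 R); split => //.
- exact: sources_Psx.
- exact: weights_wx.
- exact: sep_V2.
apply: (not_robust (e := ord0) (orth_V2 R)).
by rewrite lossPx rcs0 /V2 col2_0 expr0n subr0.
Qed.
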